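(* Let $A_n=1$ if $n=2^{k+1}-2$ for some integer $k\ge0$ and $A_n=0$ otherwise, let $D(n)=\det\left(A_{i+j}\right)_{i,j=0}^{n-1}$ for $n\ge1$, $D(0)=1$ (so $D(n)\in\{1,-1\}$), and let $T_n=D(n)D(n+2)$ for $n\ge0$. Then: (i) for every $k\ge2$ and every $n$ with $2^k\le n\le 2^{k+1}-3$, $T_n=T_{2^{k+1}-3-n}$; (ii) $T_{4n}=(-1)^n$ for all $n\ge0$; (iii) $T_{2^{k+1}n+2^k-2}=(-1)^{n+1}$ for all $n\ge0$ and all $k\ge2$.
   Context: Also $T_0=1$ and $T_1=-1$. *)

(* Defs.v *)
From mathcomp Require Import all_boot all_order all_algebra.
Set Implicit Arguments. Unset Strict Implicit. Unset Printing Implicit Defensive.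
Import GRing.Theory Num.Theory.
Local Open Scope ring_scope.

(* isA n <=> n = 2^(k+1) - 2 for some k >= 0.  Any such k satisfies k <= n,
   so the search over k < n.+2 is exhaustive. *)
Definition isA (n : nat) : bool := [exists k : 'I_n.+2, (2 ^ k.+1 - 2)%N == n].

Definition A (n : nat) : int := if isA n then 1 else 0.

(* Hankel determinant; for n = 0 the determinant of the empty matrix is 1. *)
Definition D (n : nat) : int := \det (\matrix_(i < n, j < n) A (i + j)%N).

Definition T (n : nat) : int := D n * D n.+2.

(* Main.v *)
Require Import Defs.
From mathcomp Require Import all_boot all_order all_algebra.
From mathcomp Require Import zify.
Import GRing.Theory Num.Theory.
Local Open Scope ring_scope.

Definition Dg (n : nat) (g : nat -> nat -> int) : int :=
  \det (\matrix_(i < n, k < n) g i k).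

Lemma eq_Dg n g1 g2 : (forall i k, (i < n)%N -> (k < n)%N -> g1 i k = g2 i k) ->
  Dg n g1 = Dg n g2.
Proof. by move=> H; rewrite /Dg; congr (\det _); apply/matrixP => i k; rewrite !mxE H. Qed.

Lemma Dg_tr n g : Dg n g = Dg n (fun i k => g k i).
Proof. by rewrite /Dg -det_tr; congr (\det _); apply/matrixP => i k; rewrite !mxE. Qed.

Lemma det_row1 n (M : 'M[int]_n.+1) (p : 'I_n.+1) :
  (forall j, M ord_max j = (j == p)%:R) ->
  \det M = (-1) ^+ (n + p) * \det (row' ord_max (col' p M)).
Proof.
move=> H; rewrite (expand_det_row _ ord_max) (bigD1 p) //= big1 ?addr0.
  by rewrite H eqxx mul1r.
by move=> j /negbTE Hj; rewrite H Hj mul0r.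
Qed.

Lemma Dg_row m p g : (p <= m)%N ->
  (forall k, (k <= m)%N -> g m k = (k == p)%:R) ->
  Dg m.+1 g = (-1) ^+ (m + p) * Dg m (fun i k => g i (bump p k)).
Proof.
move=> Hp H; rewrite /Dg (@det_row1 m _ (Ordinal (Hp : (p < m.+1)%N))).
  congr (_ * \det _); apply/matrixP => i k; rewrite !mxE /=.
  by rewrite /bump (leqNgt m i) ltn_ord.
by move=> j; rewrite mxE H ?(leq_ord j).
Qed.

Lemma Dg_col m p g : (p <= m)%N ->
  (forall i, (i <= m)%N -> g i m = (i == p)%:R) ->
  Dg m.+1 g = (-1) ^+ (m + p) * Dg m (fun i k => g (bump p i) k).
Proof.
move=> Hp H; rewrite Dg_tr (@Dg_row m p) //; congr (_ * _).
by rewrite Dg_tr.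
Qed.

Lemma A_pow a x : x = (2 ^ a.+1 - 2)%N -> A x = 1.
Proof.
move=> ->; rewrite /A ifT //.
have Ha : (a.+1 < 2 ^ a.+1)%N by apply: ltn_expl.
have H2 : (2 <= 2 ^ a.+1)%N by rewrite expnS; have := expn_gt0 2 a; lia.
have Hk : (a < (2 ^ a.+1 - 2).+2)%N by lia.
by apply/existsP; exists (Ordinal Hk).
Qed.

Lemma A_not a x : (2 ^ a < x + 2 < 2 ^ a.+1)%N -> A x = 0.
Proof.
move=> /andP [H1 H2]; rewrite /A; case: ifP => // /existsP [k /eqP Hk].
have H3 : (2 <= 2 ^ k.+1)%N by rewrite expnS; have := expn_gt0 2 k; lia.
have E : (x + 2 = 2 ^ k.+1)%N by lia.
rewrite E !ltn_exp2l // in H1 H2; lia.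
Qed.

Lemma sgn_eq a b : ~~ odd (a + b) -> (-1) ^+ a = (-1) ^+ b :> int.
Proof.
move=> H; rewrite -signr_odd -[RHS]signr_odd; congr (_ ^+ _).
by move: H; rewrite oddD; case: (odd a); case: (odd b).
Qed.

Definition e h c j i : nat := if (i < c)%N then i else (i - c + (h - 1 - j))%N.

Lemma fam a c j : (c + j < 2 ^ a)%N ->
  Dg (j.*2 + c).+1 (fun i k => A (e (2 ^ a) c j i + e (2 ^ a) c j k)) = (-1) ^+ j * D c.
Proof.
have h1 : (2 ^ a.+1 = 2 * 2 ^ a)%N by rewrite expnS.
have h0 : (0 < 2 ^ a)%N by rewrite expn_gt0.
have h2 : (2 ^ a.+2 = 4 * 2 ^ a)%N by rewrite !expnS; lia.
elim: j => [|j IH] H.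
  rewrite /= (@Dg_row c c) //.
    have -> : D c = Dg c (fun i k => A (i + k)) by [].
    rewrite addnn -signr_odd odd_double expr0 !mul1r.
    apply: eq_Dg => i k Hi Hk; rewrite /e /bump (leqNgt c k) Hk Hi /= ifT //.
  move=> k Hk; rewrite /e ltnn.
  case: ifP => Hkc.
    rewrite (@A_not a); first by rewrite (ltn_eqF Hkc).
    apply/andP; lia.
  have -> : k = c by lia.
  rewrite eqxx (@A_pow a) //; lia.
have -> : ((j.+1).*2 + c).+1 = ((j.*2 + c).+2).+1 by rewrite doubleS.
rewrite (@Dg_row (j.*2 + c).+2 c); last first.
  move=> k Hk; rewrite {1}/e ifF; last by lia.
  rewrite /e; case: ifP => Hkc.
    rewrite (@A_not a); first by rewrite (ltn_eqF Hkc).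
    apply/andP; lia.
  case: eqP => Hkc2.
    rewrite (@A_pow a) //; lia.
  rewrite (@A_not a.+1) //; apply/andP; lia.
  lia.
rewrite (@Dg_col (j.*2 + c).+1 c); last first.
  move=> i Hi; rewrite /bump (_ : (c <= (j.*2+c).+1)%N = true); last by lia.
  rewrite add1n.
  rewrite addnC {1}/e ifF; last by lia.
  rewrite /e; case: ifP => Hkc.
    rewrite (@A_not a); first by rewrite (ltn_eqF Hkc).
    apply/andP; lia.
  case: eqP => Hkc2.
    rewrite (@A_pow a) //; lia.
  rewrite (@A_not a.+1) //; apply/andP; lia.
  lia.
rewrite mulrA -exprD (@sgn_eq _ 1); last by lia.
rewrite expr1 exprS -mulrA; congr (_ * _).
rewrite -IH; last by lia.
have Ee : forall i, e (2 ^ a) c j.+1 (bump c i) = e (2 ^ a) c j i.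
  move=> i; rewrite /e /bump; case: (ltnP i c) => Hic.
    by rewrite add0n Hic.
  rewrite add1n ifF; lia.
by apply: eq_Dg => i k Hi Hk; rewrite !Ee.
Qed.

Lemma refl a n : (2 ^ a <= n < 2 ^ a.+1)%N ->
  D n = (-1) ^+ (n - 2 ^ a) * D (2 ^ a.+1 - 1 - n).
Proof.
move=> /andP [H1 H2].
have h1 : (2 ^ a.+1 = 2 * 2 ^ a)%N by rewrite expnS.
have Hn : n = ((n - 2 ^ a).*2 + (2 ^ a.+1 - 1 - n)).+1 by lia.
have -> : D n = Dg n (fun i k => A (i + k)) by [].
rewrite -(@fam a); last by lia.
rewrite {1}Hn; apply: eq_Dg => i k Hi Hk; rewrite /e.
by congr (A (_ + _)); case: ifP => //; lia.
Qed.

Lemma D0 : D 0 = 1.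
Proof. by rewrite /D det_mx00. Qed.

Lemma D_sq n : D n * D n = 1.
Proof.
elim/ltn_ind: n => n IH.
case: n IH => [|n] IH; first by rewrite D0 mulr1.
have := @trunc_log_bounds 2 n.+1 isT isT.
set a := trunc_log 2 n.+1 => Hb.
have {}Hb : (2 ^ a <= n.+1 < 2 ^ a.+1)%N := Hb.
have h1 : (2 ^ a.+1 = 2 * 2 ^ a)%N by rewrite expnS.
have h0 : (0 < 2 ^ a)%N by rewrite expn_gt0.
rewrite (@refl a _ Hb) mulrACA -exprD (@sgn_eq _ 0) ?expr0 ?mul1r; last by lia.
apply: IH; lia.
Qed.

Lemma D_odd n : D n.*2.+1 = (-1) ^+ n * D n.*2.
Proof.
elim/ltn_ind: n => n IH.
case: n IH => [|n] IH.
  by rewrite (@refl 0) //= expr0 mul1r expr0 mul1r.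
have := @trunc_log_bounds 2 n.+1 isT isT.
set a := trunc_log 2 n.+1 => Hb.
have {}Hb : (2 ^ a <= n.+1 < 2 ^ a.+1)%N := Hb.
have h1 : (2 ^ a.+1 = 2 * 2 ^ a)%N by rewrite expnS.
have h2 : (2 ^ a.+2 = 4 * 2 ^ a)%N by rewrite !expnS; lia.
have h0 : (0 < 2 ^ a)%N by rewrite expn_gt0.
set n' := (2 ^ a.+1 - 1 - n.+1)%N.
rewrite (@refl a.+1 (n.+1).*2.+1); last by lia.
rewrite (@refl a.+1 (n.+1).*2); last by lia.
have -> : (2 ^ a.+2 - 1 - (n.+1).*2.+1 = n'.*2)%N by lia.
have -> : (2 ^ a.+2 - 1 - (n.+1).*2 = n'.*2.+1)%N by lia.
rewrite IH; last by lia.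
rewrite !mulrA -!exprD; congr (_ * _); apply: sgn_eq; lia.
Qed.

Lemma D_even n : D n.*2 = (-1) ^+ (n./2) * D n.
Proof.
elim/ltn_ind: n => n IH.
case: n IH => [|n] IH; first by rewrite /= expr0 mul1r.
have := @trunc_log_bounds 2 n.+1 isT isT.
set a := trunc_log 2 n.+1 => Hb.
have {}Hb : (2 ^ a <= n.+1 < 2 ^ a.+1)%N := Hb.
have h1 : (2 ^ a.+1 = 2 * 2 ^ a)%N by rewrite expnS.
have h2 : (2 ^ a.+2 = 4 * 2 ^ a)%N by rewrite !expnS; lia.
have h0 : (0 < 2 ^ a)%N by rewrite expn_gt0.
set n' := (2 ^ a.+1 - 1 - n.+1)%N.
rewrite (@refl a.+1 (n.+1).*2); last by lia.
have -> : (2 ^ a.+2 - 1 - (n.+1).*2 = n'.*2.+1)%N by lia.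
rewrite D_odd IH; last by lia.
rewrite [D n.+1](@refl a _ Hb) -/n'.
rewrite !mulrA -!exprD; congr (_ * _); apply: sgn_eq; rewrite -!divn2; lia.
Qed.

Definition U m := D m * D m.+1.

Lemma U_even m : U m.*2 = (-1) ^+ m.
Proof. by rewrite /U D_odd mulrCA D_sq mulr1. Qed.

Lemma U_odd m : U m.*2.+1 = U m.
Proof.
rewrite /U D_odd -doubleS !D_even mulrACA !mulrA -!exprD (@sgn_eq _ 0) ?expr0 ?mul1r //.
rewrite -!divn2; lia.
Qed.

Lemma T_even m : T m.*2 = (-1) ^+ m * U m.
Proof.
rewrite /T /U -doubleS !D_even mulrACA -!exprD; congr (_ * _); apply: sgn_eq.
rewrite -!divn2; lia.
Qed.

Lemma U_fam i n : U (2 ^ i.+1 * n + 2 ^ i - 1) = (-1) ^+ n.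
Proof.
elim: i => [|i IH].
  have -> : (2 ^ 1 * n + 2 ^ 0 - 1 = n.*2)%N by rewrite expn1 expn0; lia.
  exact: U_even.
have h1 : (2 ^ i.+1 = 2 * 2 ^ i)%N by rewrite expnS.
have h2 : (2 ^ i.+2 = 4 * 2 ^ i)%N by rewrite !expnS; lia.
have h0 : (0 < 2 ^ i)%N by rewrite expn_gt0.
have -> : (2 ^ i.+2 * n + 2 ^ i.+1 - 1 = (2 ^ i.+1 * n + 2 ^ i - 1).*2.+1)%N by lia.
by rewrite U_odd.
Qed.

Theorem theorem2p7 :
  (forall k n : nat, (2 <= k)%N -> (2 ^ k <= n)%N -> (n <= 2 ^ k.+1 - 3)%N ->
     T n = T (2 ^ k.+1 - 3 - n)%N)
  /\ (forall n : nat, T (4 * n)%N = (-1) ^+ n)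
  /\ (forall n k : nat, (2 <= k)%N ->
        T (2 ^ k.+1 * n + 2 ^ k - 2)%N = (-1) ^+ n.+1).
Proof.
split; [|split].
- move=> k n Hk H1 H2.
  have h1 : (2 ^ k.+1 = 2 * 2 ^ k)%N by rewrite expnS.
  have h0 : (4 <= 2 ^ k)%N by rewrite (_ : 4 = 2 ^ 2)%N // leq_exp2l.
  rewrite /T (@refl k n); last by lia.
  rewrite (@refl k n.+2); last by lia.
  have -> : (2 ^ k.+1 - 1 - n.+2 = 2 ^ k.+1 - 3 - n)%N by lia.
  have -> : ((2 ^ k.+1 - 3 - n).+2 = 2 ^ k.+1 - 1 - n)%N by lia.
  rewrite mulrACA -exprD (@sgn_eq _ 0) ?expr0 ?mul1r; last by lia.
  by rewrite mulrC.
- move=> n; have -> : (4 * n = (n.*2).*2)%N by lia.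
  by rewrite T_even U_even (@sgn_eq _ 0) ?expr0 ?mul1r //; lia.
- move=> n [|[|i]] // _.
  have h1 : (2 ^ i.+1 = 2 * 2 ^ i)%N by rewrite expnS.
  have h2 : (2 ^ i.+2 = 4 * 2 ^ i)%N by rewrite !expnS; lia.
  have h3 : (2 ^ i.+3 = 8 * 2 ^ i)%N by rewrite !expnS; lia.
  have h0 : (0 < 2 ^ i)%N by rewrite expn_gt0.
  have -> : (2 ^ i.+3 * n + 2 ^ i.+2 - 2 = ((2 ^ i.+1 * n + 2 ^ i - 1).*2.+1).*2)%N by lia.
  rewrite T_even U_odd U_fam (@sgn_eq _ 1) ?expr1 //; last by lia.
  by rewrite exprS.
Qed.
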